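(* Let $A\in\mathbb{R}^{m\times N}$ and $K\subset[N]$. The following are equivalent: (i) $\mathbb{1}_K$ and $\mathbb{1}-\mathbb{1}_K=\mathbb{1}_{K^c}$ are the unique solutions of $\min\|x\|_1$ subject to $Ax=b$, $x\in[0,1]^N$, with $b=A\mathbb{1}_K$ and $b=A\mathbb{1}_{K^c}$, respectively; (ii) $\ker(A)\cap H_K=\{0\}$; (iii) $\{x\in[0,1]^N: Ax=A\mathbb{1}_K\}=\{\mathbb{1}_K\}$; (iv) $\{x\in[0,1]^N: Ax=A\mathbb{1}_{K^c}\}=\{\mathbb{1}_{K^c}\}$.
   Context: $[N]=\{1,\dots,N\}$, $K^c=[N]\setminus K$, $\mathbb{1}\in\mathbb{R}^N$ is the all-ones vector and $\mathbb{1}_K$ the indicator vector of $K$. $H_K=\{w\in\mathbb{R}^N: w_i\le 0 \text{ for } i\in K,\ w_i\ge 0 \text{ for } i\notin K\}$. *)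

(* Defs.v *)
From mathcomp Require Import all_boot all_order all_algebra.
From mathcomp Require Import reals.
Set Implicit Arguments. Unset Strict Implicit. Unset Printing Implicit Defensive.
Import Order.TTheory GRing.Theory Num.Theory.
Local Open Scope ring_scope.

Definition indic (R : realType) (N : nat) (K : {set 'I_N}) : 'cV[R]_N :=
  \col_i (if i \in K then 1 else 0).

Definition ones (R : realType) (N : nat) : 'cV[R]_N := \col_i 1.

Definition l1norm (R : realType) (N : nat) (x : 'cV[R]_N) : R :=
  \sum_i `|x i 0|.

Definition in_box (R : realType) (N : nat) (x : 'cV[R]_N) : Prop :=
  forall i, 0 <= x i 0 /\ x i 0 <= 1.

Definition unique_l1_box_solution (R : realType) (m N : nat)
  (A : 'M[R]_(m, N)) (b : 'cV[R]_m) (x0 : 'cV[R]_N) : Prop :=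
  [/\ in_box x0, A *m x0 = b &
      forall x, in_box x -> A *m x = b -> x <> x0 -> l1norm x0 < l1norm x].

Definition in_HK (R : realType) (N : nat) (K : {set 'I_N}) (w : 'cV[R]_N) : Prop :=
  forall i, (i \in K -> w i 0 <= 0) /\ (i \notin K -> 0 <= w i 0).

(* Main.v *)
Require Import Defs.
From mathcomp Require Import all_boot all_order all_algebra.
From mathcomp Require Import reals ring lra.
Import Order.TTheory GRing.Theory Num.Theory.
Local Open Scope ring_scope.

Section S.
Variables (R : realType) (m N : nat) (A : 'M[R]_(m, N)) (K : {set 'I_N}).

Lemma small_t (w : 'cV[R]_N) : exists t : R, 0 < t /\ forall i, -1 <= t * w i 0 <= 1.
Proof.
set S := \sum_i `|w i 0|.
have S0 : 0 <= S by apply: sumr_ge0 => i _.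
exists (1 + S)^-1; split; first by rewrite invr_gt0; lra.
move=> i; rewrite -ler_norml normrM gtr0_norm ?invr_gt0; last lra.
rewrite mulrC ler_pdivrMr; last lra.
have : `|w i 0| <= S.
  by rewrite /S (bigD1 i) //= lerDl; apply: sumr_ge0.
lra.
Qed.

Lemma entry_iK i : indic R K i 0 = if i \in K then 1 else 0.
Proof. by rewrite /indic mxE. Qed.
Lemma entry_iKc i : indic R (~: K) i 0 = if i \in K then 0 else 1.
Proof. by rewrite /indic mxE in_setC; case: (i \in K). Qed.

Lemma box_iK : in_box (indic R K).
Proof. by move=> i; rewrite entry_iK; case: (i \in K); lra. Qed.
Lemma box_iKc : in_box (indic R (~: K)).
Proof. by move=> i; rewrite entry_iKc; case: (i \in K); lra. Qed.

Lemma box_l1 (x : 'cV[R]_N) : in_box x -> l1norm x = \sum_i x i 0.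
Proof. by move=> hx; apply: eq_bigr => i _; rewrite ger0_norm //; case: (hx i). Qed.

Definition P2 := forall w : 'cV[R]_N, A *m w = 0 -> in_HK K w -> w = 0.
Definition P3 := forall x : 'cV[R]_N, in_box x /\ A *m x = A *m indic R K <-> x = indic R K.
Definition P4 := forall x : 'cV[R]_N, in_box x /\ A *m x = A *m indic R (~: K) <-> x = indic R (~: K).

Lemma pert w t : in_HK K w -> 0 < t -> (forall i, -1 <= t * w i 0 <= 1) ->
  in_box (indic R K + t *: w) /\ in_box (indic R (~: K) - t *: w).
Proof.
move=> hw t0 ht.
have key i : (i \in K -> t * w i 0 <= 0) /\ (i \notin K -> 0 <= t * w i 0).
  case: (hw i) => h1 h2; split => hi.
    by rewrite pmulr_rle0 // h1.
  by rewrite pmulr_rge0 // h2.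
split=> i; rewrite !mxE; have := ht i; case/andP => h1 h2;
rewrite ?in_setC;
have [k1 k2] := key i;
case: (boolP (i \in K)) => hi /=;
[have := k1 hi | have := k2 hi | have := k1 hi | have := k2 hi]; lra.
Qed.

Lemma addnot (v w : 'cV[R]_N) t : 0 < t -> w != 0 -> v + t *: w <> v.
Proof.
move=> t0 wn E; move/(congr1 (fun u => u - v)): E; rewrite addrAC !subrr add0r.
move/eqP; rewrite scaler_eq0 (negbTE wn) orbF => /eqP t00.
by rewrite t00 ltxx in t0.
Qed.

Lemma subnot (v w : 'cV[R]_N) t : 0 < t -> w != 0 -> v - t *: w <> v.
Proof.
move=> t0 wn E; move/(congr1 (fun u => u - v)): E; rewrite addrAC !subrr add0r.
move/eqP; rewrite oppr_eq0 scaler_eq0 (negbTE wn) orbF => /eqP t00.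
by rewrite t00 ltxx in t0.
Qed.

Lemma P2_P3 : P2 -> P3.
Proof.
move=> h2 x; split; last by move->; split=> //; exact: box_iK.
case=> hb hA; apply/eqP; rewrite -subr_eq0; apply/eqP; apply: h2.
  by rewrite mulmxBr hA subrr.
move=> i; rewrite !mxE; case: (hb i) => h1 h2'.
by case: (boolP (i \in K)) => hi /=; split=> // _; lra.
Qed.

Lemma P2_P4 : P2 -> P4.
Proof.
move=> h2 x; split; last by move->; split=> //; exact: box_iKc.
case=> hb hA; apply/eqP; rewrite eq_sym -subr_eq0; apply/eqP; apply: h2.
  by rewrite mulmxBr hA subrr.
move=> i; rewrite !mxE in_setC; case: (hb i) => h1 h2'.
by case: (boolP (i \in K)) => hi /=; split=> // _; lra.
Qed.

Lemma P3_P2 : P3 -> P2.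
Proof.
move=> h3 w hA hw; case: (eqVneq w 0) => // wn.
have [t [t0 ht]] := small_t w; have [b1 b2] := pert w t hw t0 ht.
exfalso; apply: (addnot (indic R K) w t t0 wn); apply/h3; split=> //.
by rewrite mulmxDr -scalemxAr hA scaler0 addr0.
Qed.

Lemma P4_P2 : P4 -> P2.
Proof.
move=> h3 w hA hw; case: (eqVneq w 0) => // wn.
have [t [t0 ht]] := small_t w; have [b1 b2] := pert w t hw t0 ht.
exfalso; apply: (subnot (indic R (~: K)) w t t0 wn); apply/h3; split=> //.
by rewrite mulmxBr -scalemxAr hA scaler0 subr0.
Qed.

Lemma P1_P2 : unique_l1_box_solution A (A *m indic R K) (indic R K) /\
       unique_l1_box_solution A (A *m indic R (~: K)) (indic R (~: K)) -> P2.
Proof.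
move=> [[_ _ u1] [_ _ u2]] w hA hw; case: (eqVneq w 0) => // wn.
have [t [t0 ht]] := small_t w; have [b1 b2] := pert w t hw t0 ht.
have eA1 : A *m (indic R K + t *: w) = A *m indic R K.
  by rewrite mulmxDr -scalemxAr hA scaler0 addr0.
have eA2 : A *m (indic R (~: K) - t *: w) = A *m indic R (~: K).
  by rewrite mulmxBr -scalemxAr hA scaler0 subr0.
have h1 := u1 _ b1 eA1 (addnot (indic R K) w t t0 wn).
have h2 := u2 _ b2 eA2 (subnot (indic R (~: K)) w t t0 wn).
move: h1 h2; rewrite !box_l1 //; try exact: box_iK; try exact: box_iKc.
have : \sum_i (indic R K + t *: w) i 0 + \sum_i (indic R (~: K) - t *: w) i 0
   = \sum_i indic R K i 0 + \sum_i indic R (~: K) i 0.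
  by rewrite -!big_split; apply: eq_bigr => i _; rewrite !mxE /=; ring.
clear u1 u2 ht b1 b2 eA1 eA2 hw hA wn; move=> e1 e2 e3; exfalso; lra.
Qed.
End S.

Theorem proposition2p3 (R : realType) (m N : nat) (A : 'M[R]_(m, N))
    (K : {set 'I_N}) :
  let iK := indic R K in
  let iKc := indic R (~: K) in
  [/\ (* (i) <-> (ii) *)
      (unique_l1_box_solution A (A *m iK) iK /\
       unique_l1_box_solution A (A *m iKc) iKc) <->
      (forall w : 'cV[R]_N, A *m w = 0 -> in_HK K w -> w = 0),
      (* (ii) <-> (iii) *)
      (forall w : 'cV[R]_N, A *m w = 0 -> in_HK K w -> w = 0) <->
      (forall x : 'cV[R]_N, in_box x /\ A *m x = A *m iK <-> x = iK)
    & (* (iii) <-> (iv) *)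
      (forall x : 'cV[R]_N, in_box x /\ A *m x = A *m iK <-> x = iK) <->
      (forall x : 'cV[R]_N, in_box x /\ A *m x = A *m iKc <-> x = iKc)].
Proof.
move=> iK iKc; rewrite /iK /iKc; split.
- split; first exact: P1_P2.
  move=> h2; have h3 := (@P2_P3 R m N A K) h2; have h4 := (@P2_P4 R m N A K) h2.
  split; split=> //; try exact: box_iK; try exact: (@box_iKc R N K).
    by move=> x hb hx hne; exfalso; apply: hne; apply/h3.
  by move=> x hb hx hne; exfalso; apply: hne; apply/h4.
- split; [exact: (@P2_P3 R m N A K) | exact: P3_P2].
- split=> h; [exact: (@P2_P4 R m N A K) ((@P3_P2 R m N A K) h) | exact: (@P2_P3 R m N A K) ((@P4_P2 R m N A K) h)].
Qed.
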